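(* Let $K$ be a perfect field, $L/K$ a finite extension, and let $L_1,\dots,L_s$ ($s=s_K(L)$) be the distinct subfields of $\bar K$ isomorphic to $L$ over $K$. Suppose there is a permutation $(i_1,\dots,i_s)$ of $(1,\dots,s)$ such that the tower $K\subseteq L_{i_1}\subseteq L_{i_1}L_{i_2}\subseteq\cdots\subseteq L_{i_1}\cdots L_{i_s}=\tilde L$ consists of $s+1$ distinct fields. Then for each integer $0\le a\le s$ there exists a finite extension $M/K$ with $\rho_K(M,L)=a\cdot r_K(L)$.
   Context: $\bar K$ is a fixed algebraic closure; $\tilde L$ is the Galois closure of $L/K$ in $\bar K$, $G=\mathrm{Gal}(\tilde L/K)$, $H=\mathrm{Gal}(\tilde L/L)$, $s_K(L)=[G:N_G(H)]$, and $r_K(L)=[N_G(H):H]$ (the number of roots of the minimal polynomial $f$ of a primitive element of $L/K$ lying in $L$). For a finite extension $M/K$, $\rho_K(M,L)$ is the number of roots of $f$ lying in $M$. *)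

(* Defs.v *)
From HB Require Import structures.
From mathcomp Require Import all_boot all_order all_algebra all_fingroup all_solvable all_field.
Set Implicit Arguments. Unset Strict Implicit. Unset Printing Implicit Defensive.
Import GRing.Theory.
Local Open Scope ring_scope.

Definition perfect_field (F : fieldType) : Prop :=
  [pchar F] =i pred0 \/
  forall p, p \in [pchar F] -> forall x : F, exists y : F, y ^+ p = x.

(* The base field K is 1%VS inside the ambient extension E (standing for Kbar). *)

Definition K_conjugate (F : fieldType) (E : splittingFieldType F)
    (L L' : {subfield E}) : Prop :=
  exists f : 'End(E), kHom 1%VS L f /\ (f @: L)%VS = L'.

Definition galois_closure_of (F : fieldType) (E : splittingFieldType F)
    (L Lt : {subfield E}) : Prop :=
  [/\ (L <= Lt)%VS, galois 1%VS Lt &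
      forall M : {subfield E}, (L <= M)%VS -> galois 1%VS M -> (Lt <= M)%VS].

Definition r_K (F : fieldType) (E : splittingFieldType F)
    (L Lt : {subfield E}) : nat :=
  (#|'N_('Gal(Lt / 1%VS))('Gal(Lt / L)) : 'Gal(Lt / L)|)%g.

(* rho_K(M,L) = n : the minimal polynomial f of x over K has exactly n
   distinct roots lying in M. *)
Definition rho_is (F : fieldType) (E : splittingFieldType F)
    (M : {subfield E}) (x : E) (n : nat) : Prop :=
  exists rs : seq E,
    [/\ uniq rs, size rs = n,
        forall y, y \in rs -> (y \in M) && root (minPoly 1%VS x) y &
        forall y, y \in M -> root (minPoly 1%VS x) y -> y \in rs].

Definition tower (F : fieldType) (E : splittingFieldType F)
    (Ls : seq {subfield E}) : seq {vspace E} :=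
  [seq \big[@prodv _ _/1%VS]_(i <- take k Ls) (i : {vspace E})
     | k <- iota 0 (size Ls).+1].

(* Main.v *)
Require Import Defs.
From HB Require Import structures.
From mathcomp Require Import all_boot all_order all_algebra all_fingroup all_solvable all_field.
Set Implicit Arguments. Unset Strict Implicit. Unset Printing Implicit Defensive.
Import GRing.Theory.
Local Open Scope ring_scope.

Section Tow.
Variables (F : fieldType) (E : splittingFieldType F).

Definition bigA (S : seq {subfield E}) : {subfield E} :=
  foldr (fun i A => (i * A)%AS) 1%AS S.

Lemma bigAE (S : seq {subfield E}) : (bigA S : {vspace E}) = \big[@prodv _ _/1%VS]_(i <- S) (i : {vspace E}).
Proof. by elim: S => [|i S IH]; rewrite ?big_nil ?big_cons //= -IH. Qed.

Lemma bigA_sub (S : seq {subfield E}) (i : {subfield E}) : i \in S -> (i <= bigA S)%VS.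
Proof.
elim: S => [|j S IH] //=; rewrite inE => /orP[/eqP -> | iS].
  exact: field_subvMr.
exact: subv_trans (IH iS) (field_subvMl _ _).
Qed.

Variable Ls : seq {subfield E}.
Definition TA k := bigA (take k Ls).

Lemma TA_nth k : (k < size Ls)%N -> (TA k.+1 : {vspace E}) = (TA k * nth 1%AS Ls k)%VS.
Proof.
move=> ks; rewrite /TA !bigAE (take_nth 1%AS ks) big_rcons /=.
by rewrite -bigAE.
Qed.

Lemma TA_mono k m : (k <= m)%N -> (TA k <= TA m)%VS.
Proof.
move=> km; rewrite /TA -(cat_take_drop k (take m Ls)) take_takel //.
rewrite !bigAE big_cat /= -!bigAE; exact: field_subvMr.
Qed.

Lemma TA_nth_sub j k : (j < k)%N -> (j < size Ls)%N -> (nth 1%AS Ls j <= TA k)%VS.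
Proof.
move=> jk js; apply: bigA_sub.
rewrite -(nth_take 1%AS jk); apply: mem_nth; rewrite size_take.
by case: ifP.
Qed.


Lemma tower_nth k : (k <= size Ls)%N -> nth 0%VS (tower Ls) k = TA k.
Proof.
move=> ks; rewrite /tower (nth_map 0%N) ?size_iota ?ltnS // nth_iota ?ltnS //.
by rewrite add0n /TA bigAE.
Qed.

Lemma TA_neq j : uniq (tower Ls) -> (j < size Ls)%N ->
  (TA j.+1 : {vspace E}) != TA j.
Proof.
move=> ut js.
have sz : size (tower Ls) = (size Ls).+1 by rewrite /tower size_map size_iota.
have h1 : (j.+1 < size (tower Ls))%N by rewrite sz ltnS.
have h2 : (j < size (tower Ls))%N by rewrite sz ltnS ltnW.
move: (nth_uniq 0%VS h1 h2 ut).
rewrite (tower_nth js) (tower_nth (ltnW js)) => ->.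
by rewrite (gtn_eqF (ltnSn j)).
Qed.

End Tow.

Section Grp.
Variables (F : fieldType) (E : splittingFieldType F) (L Lt : {subfield E}) (x : E).
Hypotheses (hL : <<1%VS; x>>%VS = L) (sLLt : (L <= Lt)%VS) (galLt : galois 1%VS Lt).

Local Notation G := 'Gal(Lt / 1%VS)%G.
Local Notation H := 'Gal(Lt / L)%G.

Lemma xL : x \in L. Proof. by rewrite -hL memv_adjoin. Qed.
Lemma xLt : x \in Lt. Proof. exact: subvP sLLt _ xL. Qed.
Lemma s1Lt : (1%VS <= Lt)%VS. Proof. exact: sub1v. Qed.
Lemma HsubG : H \subset G. Proof. exact: galS (sub1v _). Qed.

Lemma KH k : k \in G -> (k \in H) = (k x == x).
Proof.
move=> kG; apply/idP/eqP => [kH | kx].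
  exact: fixed_gal sLLt kH xL.
rewrite gal_kHom //; apply/kAHomP => z.
rewrite -hL => /Fadjoin_polyP[p Kp ->].
by rewrite -horner_map (fixedPoly_gal s1Lt kG Kp) /= kx.
Qed.

Lemma img_adj (g : gal_of Lt) : (g @: L)%VS = <<1%VS; g x>>%VS.
Proof. by rewrite -hL aimg_adjoin aimg1. Qed.

Lemma dim_img (g : gal_of Lt) (V : {vspace E}) : \dim (g @: V) = \dim V.
Proof. by rewrite limg_dim_eq // (eqP (AEnd_lker0 _)) capv0. Qed.

Lemma KN h : h \in G -> (h x \in L) = (h \in 'N_G(H))%g.
Proof.
move=> hG; rewrite inE hG /=; apply/idP/idP => [hxL | hN].
  have eL : (h @: L)%VS = L.
    apply/eqP; rewrite eqEdim dim_img leqnn andbT img_adj.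
    by apply/FadjoinP; split; rewrite ?sub1v.
  by apply/normP; rewrite gal_conjg eL.
have gLLt : galois L Lt by apply: galoisS galLt; rewrite sub1v sLLt.
rewrite -(galois_fixedField gLLt); apply/fixedFieldP; first exact: memv_gal xLt.
move=> k kH.
have e : (h * k)%g = ((k ^ h^-1) * h)%g by rewrite conjgE invgK !mulgA mulgKV.
have kJ : (k ^ h^-1)%g \in H by rewrite memJ_norm // groupV.
rewrite -galM ?xLt // e galM ?xLt //.
by rewrite (fixed_gal sLLt kJ xL).
Qed.


Lemma galVK (g : gal_of Lt) z : z \in Lt -> g ((g^-1)%g z) = z.
Proof. by move=> zL; rewrite -galM // mulVg gal_id. Qed.
Lemma galKV (g : gal_of Lt) z : z \in Lt -> (g^-1)%g (g z) = z.
Proof. by move=> zL; rewrite -galM // mulgV gal_id. Qed.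

Lemma sum_card (Q : pred (gal_of Lt)) :
  \sum_(h in G) (Q h : nat) = #|[set h in G | Q h]|.
Proof.
rewrite -sum1_card [RHS]big_mkcond [LHS]big_mkcond /=.
by apply: eq_bigr => h _; rewrite inE; case: (h \in G); case: (Q h).
Qed.

Lemma fiber_set h0 : h0 \in G -> [set h in G | h x == h0 x] = (H :* h0)%g.
Proof.
move=> h0G; apply/setP => h; rewrite inE mem_rcoset.
case hG: (h \in G) => /=.
  rewrite KH ?groupM ?groupV // galM ?xLt //.
  apply/eqP/eqP => [-> | e]; first by rewrite galKV ?xLt.
  by rewrite -[in RHS]e galVK // memv_gal ?xLt.
symmetry; apply/negP => /(subsetP HsubG); by rewrite groupMr ?groupV // hG.
Qed.

Definition R0 := undup (map (fun h : gal_of Lt => h x) (enum G)).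

Lemma R0_uniq : uniq R0. Proof. exact: undup_uniq. Qed.

Lemma R0P y : (y \in R0) = root (minPoly 1%VS x) y.
Proof.
rewrite mem_undup; apply/mapP/idP => [[h] | ry].
  by rewrite mem_enum => hG ->; apply: root_minPoly_gal s1Lt hG xLt.
have nLt : normalField 1%VS Lt by case/and3P: galLt.
have [g gG <-] := normalField_root_minPoly s1Lt nLt xLt ry.
by exists g; rewrite ?mem_enum.
Qed.

Lemma R0G y : y \in R0 -> exists2 h, h \in G & y = h x.
Proof. by rewrite mem_undup => /mapP[h]; rewrite mem_enum; exists h. Qed.

Lemma count_card (P : pred E) :
  (count P R0 * #|H|)%N = #|[set h in G | P (h x)]|.
Proof.
rewrite -sum_card.
transitivity (\sum_(h in G) \sum_(y <- R0 | P y) ((h x == y) : nat)); last first.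
  apply: eq_bigr => h hG.
  rewrite -big_filter big_mkcond /=.
  have -> : \sum_(i <- [seq y <- R0 | P y]) (h x == i : nat) =
            \sum_(i <- [seq y <- R0 | P y] | h x == i) 1.
    by rewrite [RHS]big_mkcond; apply: eq_bigr => i _; case: (h x == i).
  rewrite sum1_count.
  have -> : count [pred i | h x == i] [seq y <- R0 | P y] =
            count_mem (h x) [seq y <- R0 | P y].
    by apply: eq_count => i; rewrite /= eq_sym.
  rewrite count_uniq_mem ?filter_uniq ?R0_uniq // mem_filter.
  have -> : h x \in R0 by rewrite mem_undup; apply: (map_f (fun h : gal_of Lt => h x)); rewrite mem_enum.
  by case: (P (h x)).
rewrite exchange_big /=.
transitivity (\sum_(y <- R0 | P y) #|H|).
  by rewrite big_const_seq iter_addn_0 mulnC.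
rewrite [LHS]big_seq_cond [RHS]big_seq_cond; apply: eq_bigr => y /andP[yR _]; apply/esym.
have [h0 h0G ->] := R0G yR.
by rewrite sum_card fiber_set // card_rcoset.
Qed.


Lemma NsubG : ('N_G(H) \subset G)%g. Proof. exact: subsetIl. Qed.

Lemma S1 : [set h in G | h x \in L] = ('N_G(H))%g.
Proof.
apply/setP => h; rewrite inE; case hG: (h \in G) => /=; first exact: KN.
by symmetry; apply/negP => /(subsetP NsubG); rewrite hG.
Qed.

Lemma S2 g : g \in G -> [set h in G | h x \in (g @: L)%VS] = ('N_G(H) :* g)%g.
Proof.
move=> gG; apply/setP => h; rewrite inE mem_rcoset.
case hG: (h \in G) => /=; last first.
  by symmetry; apply/negP => /(subsetP NsubG); rewrite groupMr ?groupV // hG.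
rewrite -KN ?groupM ?groupV // galM ?xLt //.
have hxLt : h x \in Lt by apply: memv_gal xLt.
apply/idP/idP => [/memv_imgP[w wL ->] | hL'].
  by rewrite galKV // (subvP sLLt).
by rewrite -(galVK g hxLt) memv_img.
Qed.

Lemma count_img g : g \in G ->
  count (fun y => y \in (g @: L)%VS) R0 = count (fun y => y \in L) R0.
Proof.
move=> gG; apply/eqP; rewrite -(eqn_pmul2r (cardG_gt0 H)). rewrite !count_card.
by rewrite S2 // S1 card_rcoset.
Qed.

Lemma countL : count (fun y => y \in L) R0 = r_K L Lt.
Proof.
apply/eqP; rewrite -(eqn_pmul2r (cardG_gt0 H)) count_card S1 /r_K.
have sHN : (H \subset 'N_G(H))%g by rewrite subsetI HsubG normG.
by rewrite -(Lagrange sHN) mulnC.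
Qed.

Lemma conj_gal (L' : {subfield E}) : K_conjugate L L' ->
  exists2 g, g \in G & (L' : {vspace E}) = (g @: L)%VS.
Proof.
case=> f [fh <-].
have sKL : (1 <= L <= Lt)%VS by rewrite sub1v sLLt.
have nLt : normalField 1%VS Lt by case/and3P: galLt.
have [g gG eg] := kHom_to_gal (K:=1%VS) (M:=L) (E:=Lt) (f:=f) sKL nLt fh.
by exists g => //; apply: eq_in_limg.
Qed.

Lemma root_conj y : y \in R0 -> K_conjugate L <<1%VS; y>>%AS.
Proof.
case/R0G => h hG ->.
exists (gal_repr h : 'End(E)); split; first exact: k1AHom.
by rewrite img_adj.
Qed.

Lemma F7 y g : y \in R0 -> g \in G -> y \in (g @: L)%VS ->
  (g @: L)%VS = <<1%VS; y>>%VS.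
Proof.
case/R0G => h hG -> gG yL; apply/eqP; rewrite eq_sym eqEdim.
rewrite -img_adj !dim_img leqnn andbT img_adj.
by apply/FadjoinP; split; rewrite ?sub1v.
Qed.


Lemma main_aux (Ls : seq {subfield E}) : uniq Ls ->
  (forall L' : {subfield E}, L' \in Ls <-> K_conjugate L L') ->
  uniq (tower Ls) -> forall k, (k <= size Ls)%N ->
  (count (fun y => y \in TA Ls k) R0 = k * r_K L Lt)%N.
Proof.
move=> uLs memLs ut.
have YLs : forall y, y \in R0 -> <<1%VS; y>>%AS \in Ls.
  by move=> y yR; apply/memLs; exact: root_conj.
have KC : forall y k, y \in R0 -> (k <= size Ls)%N -> y \in TA Ls k ->
    (index <<1%VS; y>>%AS Ls < k)%N.
  move=> y k yR ks yT.
  rewrite ltnNge; apply/negP => kj.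
  have js : (index <<1%VS; y>>%AS Ls < size Ls)%N by rewrite index_mem YLs.
  have nY : nth 1%AS Ls (index <<1%VS; y>>%AS Ls) = <<1%VS; y>>%AS.
    by apply: nth_index; apply: YLs.
  have YT : (<<1%VS; y>>%AS <= TA Ls (index <<1%VS; y>>%AS Ls))%VS.
    apply: subv_trans (TA_mono Ls kj).
    by apply/FadjoinP; split; [exact: sub1v | exact: yT].
  move: (TA_neq ut js); rewrite (TA_nth js) nY => /negP; apply.
  by rewrite eqEsubv prodv_sub ?subvv ?field_subvMr.
elim=> [|k IH] ks.
  transitivity (count pred0 R0); last by rewrite count_pred0.
  apply: eq_in_count => y yR /=; apply/negP => yT.
  by have := KC y 0%N yR ks yT; rewrite ltn0.
have kk : (k < size Ls)%N by exact: ks.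
have LkLs : nth 1%AS Ls k \in Ls by exact: mem_nth.
have [g gG eLk] := conj_gal (proj1 (memLs _) LkLs).
have cLk : count (fun y => y \in nth 1%AS Ls k) R0 = r_K L Lt.
  rewrite -countL -(count_img gG); apply: eq_count => y; by rewrite /= eLk.
have e1 : count (fun y => y \in TA Ls k.+1) R0 =
    count (predU (fun y => y \in TA Ls k) (fun y => y \in nth 1%AS Ls k)) R0.
  apply: eq_in_count => y yR /=; apply/idP/orP.
    move=> yT; have := KC y k.+1 yR ks yT.
    rewrite ltnS leq_eqVlt => /orP[/eqP ej | jk].
      by right; rewrite -ej nth_index ?memv_adjoin ?YLs.
    have jLs : (index <<1%VS; y>>%AS Ls < size Ls)%N by rewrite index_mem YLs.
    left; apply: (subvP (TA_nth_sub jk jLs)).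
    by rewrite nth_index ?memv_adjoin ?YLs.
  case=> [yT | yL]; first exact: subvP (TA_mono Ls (leqnSn k)) _ yT.
  by rewrite (TA_nth kk); apply: subvP (field_subvMl _ _) _ yL.
have e2 : count (predI (fun y => y \in TA Ls k) (fun y => y \in nth 1%AS Ls k)) R0 = 0%N.
  transitivity (count pred0 R0); last by rewrite count_pred0.
  apply: eq_in_count => y yR /=; apply/negP => /andP[yT yL].
  have eY : nth 1%AS Ls k = <<1%VS; y>>%AS.
    by apply: val_inj => /=; rewrite eLk (F7 yR gG) // -eLk.
  have := KC y k yR (ltnW ks) yT.
  by rewrite -eY index_uniq // ltnn.
rewrite e1; move: (count_predUI (fun y => y \in TA Ls k) (fun y => y \in nth 1%AS Ls k) R0).
rewrite e2 addn0 IH ?(ltnW ks) // cLk => ->.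
by rewrite mulSn addnC.
Qed.

End Grp.

Theorem mainTheorem18 (F : fieldType) (E : splittingFieldType F)
    (L Lt : {subfield E}) (x : E) (Ls : seq {subfield E}) :
  perfect_field F ->
  <<1%VS; x>>%VS = L ->
  galois_closure_of L Lt ->
  uniq Ls ->
  (forall L' : {subfield E}, L' \in Ls <-> K_conjugate L L') ->
  uniq (tower Ls) ->
  forall a : nat, (a <= size Ls)%N ->
  exists M : {subfield E}, rho_is M x (a * r_K L Lt)%N.
Proof.
move=> _ hL [sLLt galLt _] uLs memLs ut a ha.
exists (TA Ls a); exists [seq y <- R0 Lt x | y \in TA Ls a]; split.
- by rewrite filter_uniq // R0_uniq.
- by rewrite size_filter (main_aux hL sLLt galLt uLs memLs ut ha).
- by move=> y; rewrite mem_filter => /andP[-> yR]; rewrite -(R0P hL sLLt galLt).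
- by move=> y yT ry; rewrite mem_filter yT (R0P hL sLLt galLt).
Qed.
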